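(* Let $\mathcal S$ be the set of sentences, $\mathcal I$ the set of interpretations, and $\mathcal B_{\mathcal S}=\{\mathrm{Mod}(\varphi):\varphi\in\mathcal S\}$. Then every finitely additive probability on the algebra $\mathcal B_{\mathcal S}$ is countably additive on $\mathcal B_{\mathcal S}$, i.e. for every countable collection $\{A_i\}$ of pairwise disjoint sets in $\mathcal B_{\mathcal S}$ whose union lies in $\mathcal B_{\mathcal S}$, $\mu^*(\bigcup_iA_i)=\sum_i\mu^*(A_i)$.
   Context: Setting: higher-order logic (Church's simple theory of types, without a description operator), with Henkin semantics: an interpretation consists of domains $D_\alpha$ for each type ($D_o=\{\mathsf T,\mathsf F\}$, $D_{\alpha\to\beta}$ a set of functions $D_\alpha\to D_\beta$) and a valuation of the constants (equality denoting identity) such that every term has a denotation. Sentences are closed terms of type $o$. For a sentence $\varphi$, $\mathrm{Mod}(\varphi)=\{I\in\mathcal I:\varphi\text{ is valid in }I\}$; $\mathcal B_{\mathcal S}$ is closed under complement and finite unions and intersections and contains $\mathcal I$, so it is an algebra of sets. A function $\mu^*:\mathcal B_{\mathcal S}\to\mathbb R$ is a finitely additive probability if $\mu^*(\emptyset)=0$, $\mu^*(\mathcal I)=1$, and $\mu^*(A\cap C)+\mu^*(A\cup C)=\mu^*(A)+\mu^*(C)$ for all $A,C\in\mathcal B_{\mathcal S}$ (and non-negative). *)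

(* Defs.v *)
(* Higher-order logic (Church's simple type theory,
   no description operator) with Henkin semantics. *)
From HB Require Import structures.
From mathcomp Require Import all_boot all_order all_algebra.
From mathcomp Require Import all_classical all_reals all_analysis.
Set Implicit Arguments. Unset Strict Implicit. Unset Printing Implicit Defensive.
Import Order.TTheory GRing.Theory Num.Theory.
Local Open Scope classical_set_scope.
Local Open Scope ring_scope.

Inductive ty : Type := To | Ti | Arr (a b : ty).

Section HOL.
Variables (C : Type) (ctyp : C -> ty).

Inductive var : list ty -> ty -> Type :=
| VZ (G : list ty) (t : ty) : var (t :: G) t
| VS (G : list ty) (t s : ty) : var G t -> var (s :: G) t.

Inductive tm (G : list ty) : ty -> Type :=
| Var (t : ty) : var G t -> tm G t
| Cst (c : C) : tm G (ctyp c)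
| EqC (a : ty) : tm G (Arr a (Arr a To))
| NegC : tm G (Arr To To)
| OrC : tm G (Arr To (Arr To To))
| PiC (a : ty) : tm G (Arr (Arr a To) To)
| App (a b : ty) : tm G (Arr a b) -> tm G a -> tm G b
| Lam (a b : ty) : tm (a :: G) b -> tm G (Arr a b).

Definition sentence := tm nil To.

Fixpoint dom (Di : Type) (Df : ty -> ty -> Type) (t : ty) : Type :=
  match t with To => bool | Ti => Di | Arr a b => Df a b end.

Fixpoint env (Di : Type) (Df : ty -> ty -> Type) (G : list ty) : Type :=
  match G with nil => unit | t :: G' => (dom Di Df t * env Di Df G')%type end.

Fixpoint lookup (Di : Type) (Df : ty -> ty -> Type) (G : list ty) (t : ty)
  (v : var G t) : env Di Df G -> dom Di Df t :=
  match v in var G t return env Di Df G -> dom Di Df t with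
  | VZ _ _ => fun rho => fst rho
  | VS _ _ _ v' => fun rho => lookup v' (snd rho)
  end.

(* A Henkin interpretation: nonempty domain of individuals; each D_(a->b)
   is (via the extensional application [app]) a set of functions D_a -> D_b;
   a valuation of the constants; logical constants (equality, negation,
   disjunction, Pi) have their standard meaning; and every term has a
   denotation [den] satisfying the usual clauses. *)
Record interp : Type := Interp {
  Di : Type;
  Di_nonempty : inhabited Di;
  Df : ty -> ty -> Type;
  app : forall a b : ty, Df a b -> dom Di Df a -> dom Di Df b;
  app_ext : forall (a b : ty) (f g : Df a b),
      (forall x, app f x = app g x) -> f = g;
  cval : forall c : C, dom Di Df (ctyp c);
  den : forall (G : list ty) (t : ty), tm G t -> env Di Df G -> dom Di Df t;
  den_var : forall G t (v : var G t) rho, den (Var v) rho = lookup v rho;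
  den_cst : forall G (c : C) rho, den (Cst G c) rho = cval c;
  den_eq : forall G a rho (x y : dom Di Df a),
      app (app (den (EqC G a) rho) x) y = true <-> x = y;
  den_neg : forall G rho (p : bool), app (den (NegC G) rho) p = ~~ p;
  den_or : forall G rho (p q : bool), app (app (den (OrC G) rho) p) q = p || q;
  den_pi : forall G a rho (f : Df a To),
      app (den (PiC G a) rho) f = true <-> (forall x, app f x = true);
  den_app : forall G a b (f : tm G (Arr a b)) (u : tm G a) rho,
      den (App f u) rho = app (den f rho) (den u rho);
  den_lam : forall G a b (s : tm (a :: G) b) rho (x : dom Di Df a),
      app (den (Lam s) rho) x = den s (x, rho)
}.

Definition valid (I : interp) (phi : sentence) : Prop := @den I nil To phi tt = true.
Definition Mod (phi : sentence) : set interp := [set I | valid I phi].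

Definition BS : set (set interp) := [set A | exists phi : sentence, A = Mod phi].

Definition fin_add_prob (R : realType) (mu : set interp -> R) : Prop :=
  [/\ mu set0 = 0, mu setT = 1,
      (forall A, BS A -> 0 <= mu A) &
      (forall A B, BS A -> BS B -> mu (A `&` B) + mu (A `|` B) = mu A + mu B)].

End HOL.

(* Main.v *)
Require Import Defs.
From HB Require Import structures.
From mathcomp Require Import all_boot all_order all_algebra.
From mathcomp Require Import all_classical all_reals all_analysis.
Import Order.TTheory GRing.Theory Num.Theory numFieldNormedType.Exports.
Local Open Scope classical_set_scope.
Set Implicit Arguments. Unset Strict Implicit.

Lemma dom_inhabited (C : Type) (ctyp : C -> ty) (J : interp ctyp) (t : ty) :
  inhabited (dom (Di J) (Df J) t).
Proof.
elim: t => [| |a _ b [y]].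
- exact: (inhabits true).
- exact: Di_nonempty.
- exact: (inhabits (@den _ _ J (b :: nil) (Arr a b)
    (Lam (Var ctyp (VS a (VZ nil b)))) (y, tt))).
Qed.

Section Ultra.
Variables (C : Type) (ctyp : C -> ty).
Variable U : set (set nat).
Hypotheses (UT : U setT) (U0 : ~ U set0)
  (UI : forall A B, U A -> U B -> U (A `&` B))
  (US : forall A B : set nat, A `<=` B -> U A -> U B)
  (UU : forall A, U A \/ U (~` A)).
Variable I : nat -> interp ctyp.

Definition eqU (X : nat -> Type) (s s' : forall n, X n) : Prop :=
  U [set n | s n = s' n].

Lemma eqU_refl X (s : forall n, X n) : eqU s s.
Proof. by apply: US UT => n. Qed.
Lemma eqU_sym X (s s' : forall n, X n) : eqU s s' -> eqU s' s.
Proof. by apply: US => n /= ->. Qed.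
Lemma eqU_trans X (s1 s2 s3 : forall n, X n) : eqU s1 s2 -> eqU s2 s3 -> eqU s1 s3.
Proof. by move=> h1 h2; apply: US (UI h1 h2) => n /= [-> ->]. Qed.

Definition Q (X : nat -> Type) :=
  {P : (forall n, X n) -> Prop | exists s, P = eqU s}.
Definition qcl X (s : forall n, X n) : Q X := exist _ (eqU s) (ex_intro _ s erefl).
Definition qrep X (q : Q X) : forall n, X n := proj1_sig (cid (proj2_sig q)).

Lemma qrepK X (q : Q X) : qcl (qrep q) = q.
Proof.
rewrite /qcl /qrep; case: q => P h /=; case: (cid h) => r /= e.
exact: eq_exist.
Qed.

Lemma qcl_rep X (s : forall n, X n) : eqU (qrep (qcl s)) s.
Proof.
rewrite /qrep /=; case: cid => r /= e.
have : eqU s s := eqU_refl s. by rewrite {1}e.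
Qed.

Lemma qcl_eqP X (s s' : forall n, X n) : qcl s = qcl s' <-> eqU s s'.
Proof.
split.
- move=> /(congr1 (@proj1_sig _ _)) /= e.
  have : eqU s' s' := eqU_refl s'. by rewrite -e.
- move=> h; apply: eq_exist; apply: funext => t; apply: propext; split.
  + by move=> h'; exact: eqU_trans (eqU_sym h) h'.
  + by move=> h'; exact: eqU_trans h h'.
Qed.

Definition DiU := Q (fun n => Di (I n)).
Definition DfU (a b : ty) := Q (fun n => Df (I n) a b).
Notation domn n t := (dom (Di (I n)) (Df (I n)) t).
Notation domU t := (dom DiU DfU t).

Definition coll (t : ty) : (forall n, domn n t) -> domU t :=
  match t as t0 return (forall n, domn n t0) -> domU t0 with
  | To => fun s => `[< U [set n | s n = true] >]
  | Ti => fun s => qcl s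
  | Arr a b => fun s => qcl s
  end.
Definition rep (t : ty) : domU t -> forall n, domn n t :=
  match t as t0 return domU t0 -> forall n, domn n t0 with
  | To => fun b _ => b
  | Ti => fun q => qrep q
  | Arr a b => fun q => qrep q
  end.

Lemma collTo (s : forall n, domn n To) : coll s = true <-> U [set n | s n = true].
Proof. by rewrite /=; split => [/asboolP|/asboolP]. Qed.

Lemma coll_rep t (x : domU t) : coll (rep x) = x.
Proof.
case: t x => [b||a b q] /=; try exact: qrepK.
case: b; apply/asboolP => //=.
  by apply: US UT.
by move=> h; apply: U0; apply: US h => n.
Qed.

Lemma rep_coll t (s : forall n, domn n t) : eqU (rep (coll s)) s.
Proof.
case: t s => [s||a b s] /=; try exact: qcl_rep.
case: (UU [set n | s n = true]) => h.
  by move/asboolP: (h) => ->; apply: US h => n /= ->.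
have hn : ~ U [set n | s n = true].
  by move=> h'; apply: U0; apply: US (UI h h') => n [].
have -> : `[< U [set n | s n = true] >] = false by apply/asboolP.
by apply: US h => n /=; case: (s n).
Qed.

Lemma coll_eqU t (s s' : forall n, domn n t) : eqU s s' -> coll s = coll s'.
Proof.
case: t s s' => [s s' h|s s' h|a b s s' h] /=; try exact/qcl_eqP.
apply/asboolP/asboolP => h'.
  by apply: US (UI h h') => n /= [<-].
by apply: US (UI h h') => n /= [->].
Qed.

Lemma coll_inj t (s s' : forall n, domn n t) : coll s = coll s' -> eqU s s'.
Proof.
case: t s s' => [s s'|s s'|a b s s'] /=; try by move/qcl_eqP.
case: (UU [set n | s n = true]) => h.
  move/asboolP: (h) => -> /esym/asboolP h'.
  by apply: US (UI h h') => n /= [-> ->].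
have hn : ~ U [set n | s n = true].
  by move=> h'; apply: U0; apply: US (UI h h') => n [].
have -> : `[< U [set n | s n = true] >] = false by apply/asboolP.
move/esym/asboolP => hn'.
case: (UU [set n | s' n = true]) => // h'.
by apply: US (UI h h') => n /= [/negP/negbTE -> /negP/negbTE ->].
Qed.

Lemma eqU_map (X Y : nat -> Type) (f : forall n, X n -> Y n) (s s' : forall n, X n) :
  eqU s s' -> eqU (fun n => f n (s n)) (fun n => f n (s' n)).
Proof. by apply: US => n /= ->. Qed.

Fixpoint lift (G : list ty) : env DiU DfU G -> forall n, env (Di (I n)) (Df (I n)) G :=
  match G as G0 return env DiU DfU G0 -> forall n, env (Di (I n)) (Df (I n)) G0 with
  | nil => fun _ _ => tt
  | t :: G' => fun rho n => (rep rho.1 n, lift rho.2 n)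
  end.

Lemma lookup_lift G t (v : var G t) rho n :
  lookup v (lift rho n) = rep (lookup v rho) n.
Proof. by elim: v rho => [G' t' | G' t' s v IH] rho //=. Qed.

Definition appU (a b : ty) (f : DfU a b) (x : domU a) : domU b :=
  coll (fun n => app (qrep f n) (rep x n)).

Definition cvalU (c : C) : domU (ctyp c) := coll (fun n => cval (I n) c).

Definition denU (G : list ty) (t : ty) (s : tm ctyp G t) (rho : env DiU DfU G) : domU t :=
  coll (fun n => den s (lift rho n)).

Lemma appU_coll a b (s : forall n, Df (I n) a b) x :
  appU (coll (t := Arr a b) s) x = coll (fun n => app (s n) (rep x n)).
Proof.
apply: coll_eqU.
exact: (eqU_map (fun n (f : Df (I n) a b) => app f (rep x n)) (rep_coll (t := Arr a b) s)).
Qed.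


Lemma eqU_all X (s s' : forall n, X n) : (forall n, s n = s' n) -> eqU s s'.
Proof. by move=> h; apply: US UT => n _; exact: h. Qed.

Lemma IU_var G t (v : var G t) (rho : env DiU DfU G) :
  denU (Var ctyp v) rho = lookup v rho.
Proof.
rewrite -[RHS]coll_rep; apply: coll_eqU; apply: eqU_all => n.
by rewrite den_var lookup_lift.
Qed.

Lemma IU_cst G (c : C) (rho : env DiU DfU G) : denU (Cst ctyp G c) rho = cvalU c.
Proof. by apply: coll_eqU; apply: eqU_all => n; rewrite den_cst. Qed.

Lemma IU_app G a b (f : tm ctyp G (Arr a b)) (u : tm ctyp G a) (rho : env DiU DfU G) :
  denU (App f u) rho = appU (denU f rho) (denU u rho).
Proof.
rewrite /denU appU_coll; apply: coll_eqU.
apply: eqU_trans (eqU_map (fun n (x : domn n a) => app (den f (lift rho n)) x)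
   (eqU_sym (rep_coll (fun n => den u (lift rho n))))).
by apply: eqU_all => n; rewrite den_app.
Qed.

Lemma IU_lam G a b (s : tm ctyp (a :: G) b) (rho : env DiU DfU G) (x : domU a) :
  appU (denU (Lam s) rho) x = denU s (x, rho).
Proof.
rewrite /denU appU_coll; apply: coll_eqU; apply: eqU_all => n.
by rewrite den_lam.
Qed.

Lemma IU_neg G (rho : env DiU DfU G) (p : bool) :
  appU (denU (NegC ctyp G) rho) p = ~~ p.
Proof.
rewrite /denU appU_coll -[RHS](coll_rep (t := To)); apply: coll_eqU; apply: eqU_all => n.
by rewrite den_neg.
Qed.

Lemma IU_or G (rho : env DiU DfU G) (p q : bool) :
  appU (appU (denU (OrC ctyp G) rho) p) q = p || q.
Proof.
rewrite /denU appU_coll appU_coll -[RHS](coll_rep (t := To)).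
by apply: coll_eqU; apply: eqU_all => n; rewrite den_or.
Qed.

Lemma IU_eq G a (rho : env DiU DfU G) (x y : domU a) :
  appU (appU (denU (EqC ctyp G a) rho) x) y = true <-> x = y.
Proof.
rewrite /denU appU_coll appU_coll collTo.
have -> : [set n | app (app (den (EqC ctyp G a) (lift rho n)) (rep x n)) (rep y n) = true]
   = [set n | rep x n = rep y n].
  by apply: funext => n; apply: propext; apply: den_eq.
split.
  by move=> h; rewrite -(coll_rep x) -(coll_rep y); exact: coll_eqU.
by move=> ->; exact: eqU_refl.
Qed.

Lemma IU_pi G a (rho : env DiU DfU G) (f : DfU a To) :
  appU (denU (PiC ctyp G a) rho) f = true <-> (forall x, appU f x = true).
Proof.
rewrite /denU appU_coll collTo.
have -> : [set n | app (den (PiC ctyp G a) (lift rho n)) (rep (t := Arr a To) f n) = true]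
   = [set n | forall x, app (qrep f n) x = true].
  by apply: funext => n; apply: propext; apply: den_pi.
split.
  move=> h x; rewrite /appU collTo; apply: US h => n /=; exact.
move=> h.
have w : forall n, exists x : domn n a,
    (exists y, app (qrep f n) y = false) -> app (qrep f n) x = false.
  move=> n; case: (pselect (exists y, app (qrep f n) y = false)) => [[y hy]|hn].
    by exists y.
  by case: (dom_inhabited (I n) a) => y; exists y.
pose xs n := proj1_sig (cid (w n)).
have hxs n : (exists y, app (qrep f n) y = false) -> app (qrep f n) (xs n) = false.
  exact: (proj2_sig (cid (w n))).
case: (UU [set n | forall x, app (qrep f n) x = true]) => // hc.
exfalso; apply: U0.
have := h (coll xs); rewrite /appU collTo => h1.
have h2 := eqU_map (fun n (z : domn n a) => app (qrep f n) z) (rep_coll xs).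
apply: US (UI (UI hc h1) h2) => n /= [[hn e1] e2].
move: e1; rewrite e2 hxs //.
apply: contrapT => hne; apply: hn => z; apply: contrapT => hz.
by apply: hne; exists z; move/negP: hz => /negbTE.
Qed.

Lemma IU_ext a b (f g : DfU a b) : (forall x, appU f x = appU g x) -> f = g.
Proof.
move=> h; rewrite -(qrepK f) -(qrepK g); apply/qcl_eqP.
have w : forall n, exists x : domn n a,
    qrep f n <> qrep g n -> app (qrep f n) x <> app (qrep g n) x.
  move=> n; case: (pselect (qrep f n = qrep g n)) => [e|ne].
    by case: (dom_inhabited (I n) a) => y; exists y.
  apply: contrapT => hn; apply: ne; apply: app_ext => x.
  apply: contrapT => hx; apply: hn; exists x => _; exact: hx.
pose xs n := proj1_sig (cid (w n)).
have hxs n : qrep f n <> qrep g n -> app (qrep f n) (xs n) <> app (qrep g n) (xs n).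
  exact: (proj2_sig (cid (w n))).
case: (UU [set n | qrep f n = qrep g n]) => // hc.
exfalso; apply: U0.
have h1 := coll_inj (h (coll xs)).
have h2 := eqU_map (fun n (z : domn n a) => app (qrep f n) z) (rep_coll xs).
have h3 := eqU_map (fun n (z : domn n a) => app (qrep g n) z) (rep_coll xs).
apply: US (UI (UI hc h1) (UI h2 h3)) => n /= [[hn e1] [e2 e3]].
by apply: (hxs n hn); rewrite -e2 -e3.
Qed.

Lemma DiU_ne : inhabited DiU.
Proof.
have w : forall n, exists x : Di (I n), True.
  by move=> n; case: (Di_nonempty (I n)) => x; exists x.
exact: inhabits (qcl (fun n => proj1_sig (cid (w n)))).
Qed.

Definition IU : interp ctyp :=
  @Interp C ctyp DiU DiU_ne DfU appU IU_ext cvalU denU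
    IU_var IU_cst IU_eq IU_neg IU_or IU_pi IU_app IU_lam.

Lemma los (phi : sentence ctyp) : valid IU phi <-> U [set n | valid (I n) phi].
Proof. by rewrite /valid /= /denU collTo. Qed.

End Ultra.

Unset Implicit Arguments.
Local Open Scope ring_scope.

Lemma fin_supp (C : Type) (ctyp : C -> ty) (A : nat -> set (interp ctyp)) :
  (forall i, BS (A i)) -> (forall i j, i <> j -> A i `&` A j = set0) ->
  BS (\bigcup_i A i) -> exists N, forall i, (N <= i)%N -> A i = set0.
Proof.
move=> hA hdis [phi hphi].
apply: contrapT => hN.
have w : forall n, exists p : nat * interp ctyp, (n <= p.1)%N /\ A p.1 p.2.
  move=> n; apply: contrapT => hn; apply: hN; exists n => i hi.
  apply/seteqP; split => // x Ax; apply: hn; by exists (i, x).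
pose p n := proj1_sig (cid (w n)).
have hp n : (n <= (p n).1)%N /\ A (p n).1 (p n).2 := proj2_sig (cid (w n)).
have [G [GU sub]] := @ultraFilterLemma nat (\oo) _.
have GP : ProperFilter G := @ultra_proper _ _ GU.
have UT : G setT by exact: filterT.
have U0 : ~ G set0 by exact: filter_not_empty.
have UI : forall X Y, G X -> G Y -> G (X `&` Y).
  by move=> X Y hx hy; exact: filterI.
have US : forall X Y : set nat, X `<=` Y -> G X -> G Y.
  by move=> X Y hxy; exact: filterS.
have UU : forall X, G X \/ G (~` X) := fun X => in_ultra_setVsetC X GU.
have tail : forall m, G [set n | (m < n)%N].
  by move=> m; apply: sub; exists m.+1.
pose J := IU UT U0 UI US UU (fun n => (p n).2).
have vJ : valid J phi.
  apply/(los UT U0 UI US UU); apply: (US _ _ _ UT) => n _ /=.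
  have : (\bigcup_i A i) (p n).2 by exists (p n).1 => //; exact: (hp n).2.
  by rewrite hphi.
have : (\bigcup_i A i) J by rewrite hphi.
case=> j _ AjJ.
have [psi hpsi] := hA j.
have : G [set n | valid ((fun n => (p n).2) n) psi].
  by apply/(los UT U0 UI US UU); move: AjJ; rewrite hpsi.
move=> hG; apply: (U0); apply: (US _ _ _ (UI _ _ hG (tail j))) => n /= [vn jn].
have kn : (p n).1 <> j.
  by move=> e; have := (hp n).1; rewrite e; move: jn; rewrite ltnNge => /negP.
have : (A (p n).1 `&` A j) (p n).2 by split; [exact: (hp n).2 | rewrite hpsi].
by rewrite hdis.
Qed.

Lemma BSU (C : Type) (ctyp : C -> ty) (X Y : set (interp ctyp)) :
  BS X -> BS Y -> BS (X `|` Y).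
Proof.
move=> [phi ->] [psi ->]; exists (App (App (OrC ctyp nil) phi) psi).
apply/seteqP; split => J /=; rewrite /Mod /valid /= !den_app den_or.
  by case => ->; rewrite ?orbT.
by case/orP; [left|right].
Qed.

Fixpoint Bu (T : Type) (A : nat -> set T) (n : nat) : set T :=
  if n is k.+1 then Bu T A k `|` A k else set0.
Arguments Bu {T}.

Lemma BuE (T : Type) (A : nat -> set T) n x : Bu A n x <-> exists i, (i < n)%N /\ A i x.
Proof.
elim: n => [|n IH] /=; first by split => // [[i []]].
split.
  case => [/IH [i [hi Ai]]|An]; last by exists n.
  by exists i; split => //; apply: ltnW.
case=> i [hi Ai]; move: hi; rewrite ltnS leq_eqVlt => /orP [/eqP e|hi].
  by right; rewrite -e.
by left; apply/IH; exists i.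
Qed.

Theorem mainTheorem9 (C : Type) (ctyp : C -> ty) (R : realType)
  (mu : set (interp ctyp) -> R) :
  fin_add_prob mu ->
  forall A : nat -> set (interp ctyp),
    (forall i, @BS C ctyp (A i)) ->
    (forall i j, i <> j -> A i `&` A j = set0) ->
    @BS C ctyp (\bigcup_i A i) ->
    (fun n => \sum_(0 <= i < n) mu (A i)) @ \oo --> mu (\bigcup_i A i).
Proof.
move=> [m0 m1 mpos madd] A hA hdis hU.
have [N hN] := @fin_supp _ _ A hA hdis hU.
have P : forall n, \sum_(0 <= i < n.+1) mu (A i) = mu (Bu A n.+1) /\ BS (Bu A n.+1).
  elim=> [|n [IH hB]].
    by rewrite big_nat1 /= set0U; split => //; exact: hA.
  split; last exact: (@BSU _ _ _ _ hB (hA n.+1)).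
  rewrite big_nat_recr //= IH.
  have := madd _ _ hB (hA n.+1).
  have -> : Bu A n.+1 `&` A n.+1 = set0.
    apply/seteqP; split => // x [/BuE [i [hi Ai]] An].
    have : (A i `&` A n.+1) x by [].
    by rewrite hdis // => e; move: hi; rewrite e ltnn.
  by rewrite m0 add0r.
have E : forall k, (N <= k)%N -> Bu A k.+1 = \bigcup_i A i.
  move=> k hk; apply/seteqP; split => x.
    by move/BuE => [i [_ Ai]]; exists i.
  case=> i _ Ai; apply/BuE; exists i; split => //.
  rewrite ltnS; apply: contrapT => /negP; rewrite -ltnNge => hi.
  by move: Ai; rewrite hN //; apply: leq_trans hk (ltnW hi).
apply: cvg_trans; first apply: (near_eq_cvg (f := cst (mu (\bigcup_i A i)))).
  exists N.+1 => // n /= hn.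
  case: n hn => // k hk.
  by rewrite (P k).1 E.
exact: cvg_cst.
Qed.
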